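(* Let $Z$ be a classical random variable on $\{0,1\}^m$ and $B$ a quantum system with joint state $\rho_{ZB}=\sum_z p_z|z\rangle\langle z|\otimes\rho^z_B$. If $\|\rho_{ZB}-\rho_{U_m}\otimes\rho_B\|_{\mathrm{tr}}>\epsilon$, then there exists $i\in[m]$ such that $$\Big\|\sum_{z:\,z_i=0}p_z\,|z_{[i-1]}\rangle\langle z_{[i-1]}|\otimes\rho^z_B-\sum_{z:\,z_i=1}p_z\,|z_{[i-1]}\rangle\langle z_{[i-1]}|\otimes\rho^z_B\Big\|_{\mathrm{tr}}>\frac{\epsilon}{m}.$$
   Context: $[N]=\{1,\dots,N\}$; $z_i$ is the $i$-th bit of $z$ and $z_{[i-1]}$ the string of its first $i-1$ bits (empty for $i=1$). $\|A\|_{\mathrm{tr}}=\mathrm{tr}\sqrt{A^\dagger A}$; $\rho_{U_m}=2^{-m}\mathbb{1}$ is the fully mixed state on $m$ qubits; $\rho^z_B$ are density operators and $(p_z)$ a probability distribution. *)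

(* Defs.v *)
From HB Require Import structures.
From mathcomp Require Import all_boot all_order all_algebra all_field.
From Stdlib Require Import ClassicalEpsilon.
Set Implicit Arguments. Unset Strict Implicit. Unset Printing Implicit Defensive.
Import Order.TTheory GRing.Theory Num.Theory.
Local Open Scope ring_scope.

Definition adjmx n (A : 'M[algC]_n) : 'M[algC]_n := (map_mx Num.conj A)^T.

Definition psdmx n (A : 'M[algC]_n) : Prop :=
  adjmx A = A /\ forall v : 'rV[algC]_n, 0 <= (v *m A *m (map_mx Num.conj v)^T) 0 0.

Definition density n (A : 'M[algC]_n) : Prop := psdmx A /\ \tr A = 1.

Definition sqrtmx n (M : 'M[algC]_n) : 'M[algC]_n :=
  match excluded_middle_informative (exists S : 'M[algC]_n, psdmx S /\ S *m S = M) with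
  | left H => proj1_sig (constructive_indefinite_description _ H)
  | right _ => 0
  end.

Definition trnorm n (A : 'M[algC]_n) : algC := \tr (sqrtmx (adjmx A *m A)).

(* operators on the Hilbert space with orthonormal basis indexed by a finType T *)
Definition op (T : finType) := 'M[algC]_#|T|.

Definition ketbra (T : finType) (z : T) : op T := delta_mx (enum_rank z) (enum_rank z).

Definition tens (T1 T2 : finType) (A : op T1) (B : op T2) : op (T1 * T2)%type :=
  \matrix_(i, j) (A (enum_rank (enum_val i).1) (enum_rank (enum_val j).1)
                  * B (enum_rank (enum_val i).2) (enum_rank (enum_val j).2)).

(* z_[i] : the first i bits of z (bits are 0-indexed: bit i of z is tnth z i) *)
Definition bitprefix m (z : m.-tuple bool) (i : 'I_m) : (val i).-tuple bool :=
  [tuple tnth z (widen_ord (ltnW (ltn_ord i)) j) | j < val i].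

Definition rhoU (m : nat) : op (m.-tuple bool) := ((2 ^ m)%:R)^-1 *: 1%:M.

(* Main.v *)
Require Import Defs.
From mathcomp Require Import all_boot all_order all_algebra all_field.
From mathcomp Require Import sesquilinear spectral.
From Stdlib Require Import ClassicalEpsilon.
Import Order.TTheory GRing.Theory Num.Theory.
Local Open Scope ring_scope.
Set Implicit Arguments. Unset Strict Implicit. Unset Printing Implicit Defensive.

Lemma normB2 (a b : algC) :
  `|a - b| ^+ 2 = `|a| ^+ 2 + `|b| ^+ 2 - (a * b^* + (a * b^*)^*).
Proof.
rewrite !normCK rmorphB rmorphM /= conjCK mulrBl !mulrBr.
rewrite [b * a^*]mulrC opprB addrA.
rewrite -!addrA; congr (_ + _); rewrite addrC -!addrA; congr (_ + _).
by rewrite opprD addrC.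
Qed.

Definition cmx m1 m2 (A : 'M[algC]_(m1, m2)) : 'M[algC]_(m2, m1) := (map_mx Num.conj A)^T.

Lemma cmxM m1 m2 m3 (A : 'M[algC]_(m1, m2)) (B : 'M[algC]_(m2, m3)) :
  cmx (A *m B) = cmx B *m cmx A.
Proof. by rewrite /cmx map_mxM trmx_mul. Qed.

Lemma cmxK m1 m2 (A : 'M[algC]_(m1, m2)) : cmx (cmx A) = A.
Proof. by apply/matrixP=> i j; rewrite !mxE conjCK. Qed.

Lemma cmx1 m : cmx (1%:M : 'M[algC]_m) = 1%:M.
Proof. by apply/matrixP=> i j; rewrite !mxE eq_sym; case: (i == j); rewrite /= ?conjC1 ?conjC0. Qed.

Lemma cmx_diag m (d : 'rV[algC]_m) : cmx (diag_mx d) = diag_mx (map_mx Num.conj d).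
Proof.
apply/matrixP=> i j; rewrite !mxE eq_sym; case: eqVneq => [->|_]; rewrite /= ?mulr1n ?mulr0n ?conjC0 //.
Qed.

Lemma adjmx_cmx n (A : 'M[algC]_n) : adjmx A = cmx A.
Proof. by []. Qed.

Lemma tstar_cmx m1 m2 (A : 'M[algC]_(m1, m2)) : map_mx Num.conj (A ^T) = cmx A.
Proof. by rewrite /cmx map_trmx. Qed.

Definition norm2 n (v : 'rV[algC]_n) := \sum_i `|v 0 i| ^+ 2.

Lemma norm2E n (v : 'rV[algC]_n) : norm2 v = (v *m cmx v) 0 0.
Proof. by rewrite /norm2 mxE; apply: eq_bigr => i _; rewrite !mxE normCK. Qed.

Lemma norm2_ge0 n (v : 'rV[algC]_n) : 0 <= norm2 v.
Proof. by apply: sumr_ge0 => i _; rewrite exprn_ge0. Qed.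

Definition contr n (K : 'M[algC]_n) := forall v : 'rV_n, norm2 (v *m K) <= norm2 v.
Definition unitr n (Q : 'M[algC]_n) := Q *m cmx Q = 1%:M.

Lemma unitr_cmx n (Q : 'M[algC]_n) : unitr Q -> unitr (cmx Q).
Proof. by rewrite /unitr cmxK; apply: mulmx1C. Qed.

Lemma unitrC n (Q : 'M[algC]_n) : unitr Q -> cmx Q *m Q = 1%:M.
Proof. exact: mulmx1C. Qed.

Lemma norm2U n (Q : 'M[algC]_n) v : unitr Q -> norm2 (v *m Q) = norm2 v.
Proof. by move=> UQ; rewrite !norm2E cmxM mulmxA -(mulmxA v) UQ mulmx1. Qed.

Lemma contrUl n (Q K : 'M[algC]_n) : unitr Q -> contr K -> contr (Q *m K).
Proof. by move=> UQ cK v; rewrite mulmxA; apply: le_trans (cK _) _; rewrite norm2U. Qed.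

Lemma contrUr n (Q K : 'M[algC]_n) : unitr Q -> contr K -> contr (K *m Q).
Proof. by move=> UQ cK v; rewrite mulmxA norm2U. Qed.

Lemma quad_diag n (v : 'rV[algC]_n) d :
  (v *m diag_mx d *m cmx v) 0 0 = \sum_k d 0 k * `|v 0 k| ^+ 2.
Proof.
rewrite mul_mx_diag mxE; apply: eq_bigr => k _; rewrite !mxE normCK.
by rewrite -!mulrA mulrCA.
Qed.

Lemma delta_norm2 n (k : 'I_n) : norm2 (delta_mx 0 k : 'rV[algC]_n) = 1.
Proof.
rewrite /norm2 (bigD1 k) //= big1 ?addr0 => [|j jk]; rewrite !mxE ?eqxx.
  by rewrite normr1 expr1n.
by rewrite (negbTE jk) /= normr0 expr0n.
Qed.

Lemma delta_mulE n m (k : 'I_n) (M : 'M[algC]_(n, m)) j : ((delta_mx 0 k : 'rV[algC]_n) *m M) 0 j = M k j.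
Proof. by rewrite -rowE mxE. Qed.

Lemma spectral_herm n (S : 'M[algC]_n) : cmx S = S ->
  exists Q d, unitr Q /\ S = cmx Q *m diag_mx d *m Q.
Proof.
move=> hS.
have nS : S \is normalmx by rewrite qualifE tstar_cmx hS.
have /orthomx_spectralP eS := nS.
have UP := spectral_unitarymx S.
exists (spectralmx S), (spectral_diag S); split.
  by move/unitarymxP: UP; rewrite tstar_cmx.
by rewrite {1}eS invmx_unitary // tstar_cmx.
Qed.

Lemma cs_lemma (I : finType) (x y : I -> algC) (t : algC) :
  0 <= t -> \sum_j `|x j| ^+ 2 <= 1 -> \sum_j `|y j| ^+ 2 = t ^+ 2 ->
  (\sum_j x j * y j) + (\sum_j x j * y j)^* <= t *+ 2.
Proof.
move=> t0 hx hy; have [tz|tn0] := eqVneq t 0.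
  subst t.
  have y0 : forall j, y j = 0.
    move=> j; rewrite expr0n /= in hy.
    have h := psumr_eq0P (fun i _ => exprn_ge0 2 (normr_ge0 (y i))) hy.
    by apply/eqP; rewrite -normr_eq0 -sqrf_eq0 h.
  rewrite big1 ?rmorph0 ?addr0 ?mul0rn // => j _; by rewrite y0 mulr0.
have tp : 0 < t by rewrite lt_def tn0.
set S := \sum_j x j * y j.
have H : 0 <= \sum_j `|t * x j - (y j)^*| ^+ 2 by apply: sumr_ge0 => j _; rewrite exprn_ge0.
have E : \sum_j `|t * x j - (y j)^*| ^+ 2 =
   t ^+ 2 * \sum_j `|x j| ^+ 2 + \sum_j `|y j| ^+ 2 - t * (S + S^*).
  transitivity (\sum_j (t^+2 * `|x j|^+2 + `|y j|^+2 - t * (x j * y j + (x j * y j)^*))); last first.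
    by rewrite sumrB big_split /= -!mulr_sumr big_split /= /S rmorph_sum.
  apply: eq_bigr => j _; rewrite normB2 normrM exprMn (ger0_norm t0) norm_conjC conjCK.
  by rewrite -mulrA rmorphM /= (geC0_conj t0) mulrDr.
rewrite E hy subr_ge0 in H.
have H2 : t * (S + S^*) <= t * (t *+ 2).
  apply: le_trans H _; rewrite mulrnAr -expr2 mulr2n lerD2r.
  by rewrite -[X in _ <= X]mulr1 ler_wpM2l // exprn_ge0.
by rewrite ler_pM2l in H2.
Qed.

Lemma diag_mxM n (a b : 'rV[algC]_n) :
  diag_mx a *m diag_mx b = diag_mx (\row_j (a 0 j * b 0 j)).
Proof.
apply/matrixP=> i j; rewrite mul_diag_mx !mxE.
by rewrite mulrnAr.
Qed.

Lemma quad_spec n (P : 'M[algC]_n) (d : 'rV_n) (k : 'I_n) : unitr P ->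
  let v := (delta_mx 0 k : 'rV[algC]_n) *m P in
  (v *m (cmx P *m diag_mx d *m P) *m cmx v) 0 0 = d 0 k.
Proof.
move=> UP v; rewrite /v cmxM !mulmxA -(mulmxA _ P) UP mulmx1.
rewrite -!mulmxA (mulmxA P) UP mul1mx !mulmxA quad_diag.
rewrite (bigD1 k) //= big1 ?addr0 => [|j jk]; rewrite !mxE ?eqxx.
  by rewrite normr1 expr1n mulr1.
by rewrite (negbTE jk) /= normr0 expr0n mulr0.
Qed.

Lemma spectral_psd n (S : 'M[algC]_n) : psdmx S ->
  exists Q d, [/\ unitr Q, S = cmx Q *m diag_mx d *m Q & forall k, 0 <= d 0 k].
Proof.
move=> [hS qS]; have [Q [d [UQ eS]]] := spectral_herm hS.
exists Q, d; split => // k.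
by have := qS ((delta_mx 0 k : 'rV[algC]_n) *m Q); rewrite -/(cmx _) {1}eS quad_spec.
Qed.

Lemma key_le n (A S K : 'M[algC]_n) : psdmx S -> S *m S = cmx A *m A -> contr K ->
  \tr (K *m A) + (\tr (K *m A))^* <= \tr S *+ 2.
Proof.
move=> pS SS cK; have [Q [d [UQ eS d0]]] := spectral_psd pS.
pose A' := A *m cmx Q; pose K' := Q *m K.
have trKA : \tr (K *m A) = \tr (K' *m A').
  rewrite /K' /A' -[K *m A]mulmx1 -(unitrC UQ) !mulmxA mxtrace_mulC !mulmxA.
  by [].
have trS : \tr S = \sum_k d 0 k.
  by rewrite eS mxtrace_mulC mulmxA UQ mul1mx mxtrace_diag.
have AA : cmx A' *m A' = diag_mx d *m diag_mx d.
  rewrite /A' cmxM cmxK !mulmxA -(mulmxA _ (cmx A)) -SS eS.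
  by rewrite !mulmxA UQ mul1mx -!(mulmxA _ Q (cmx Q)) !UQ !mulmx1.
have col : forall k, \sum_j `|A' j k| ^+ 2 = d 0 k ^+ 2.
  move=> k; have := congr1 (fun M : 'M[algC]_n => M k k) AA.
  rewrite diag_mxM /= !mxE eqxx mulr1n => E.
  rewrite -expr2 in E; rewrite -E; apply: eq_bigr => j _.
  by rewrite !mxE normCKC.
have row : forall k, \sum_j `|K' k j| ^+ 2 <= 1.
  move=> k; have := contrUl UQ cK (delta_mx 0 k); rewrite delta_norm2 /norm2.
  by under eq_bigr do rewrite delta_mulE.
have trE : \tr (K' *m A') = \sum_k \sum_j K' k j * A' j k.
  by apply: eq_bigr => k _; rewrite mxE.
rewrite trKA trE trS rmorph_sum /= -big_split /= -sumrMnl.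
apply: ler_sum => k _.
have := cs_lemma (x := K' k) (y := fun j => A' j k) (d0 k) (row k) (col k).
by rewrite rmorph_sum.
Qed.

Lemma key_eq n (A S : 'M[algC]_n) : psdmx S -> S *m S = cmx A *m A ->
  exists W, contr W /\ \tr (W *m A) = \tr S.
Proof.
move=> pS SS; have [Q [d [UQ eS d0]]] := spectral_psd pS.
pose A' := A *m cmx Q.
have AA : cmx A' *m A' = diag_mx d *m diag_mx d.
  rewrite /A' cmxM cmxK !mulmxA -(mulmxA _ (cmx A)) -SS eS.
  by rewrite !mulmxA UQ mul1mx -!(mulmxA _ Q (cmx Q)) !UQ !mulmx1.
pose di := \row_j (d 0 j)^-1.
pose W' := diag_mx di *m cmx A'.
exists (cmx Q *m W'); split.
  move=> v; rewrite mulmxA -(norm2U v (unitr_cmx UQ)); set u := v *m cmx Q.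
  have cdi : cmx (diag_mx di) = diag_mx di.
    rewrite cmx_diag; congr diag_mx; apply/matrixP => i j; rewrite !mxE.
    by rewrite geC0_conj // invr_ge0.
  rewrite norm2E [cmx (u *m _)]cmxM /W' [cmx (diag_mx di *m _)]cmxM cmxK cdi !mulmxA.
  rewrite -(mulmxA _ A (cmx Q)) -/A' -(mulmxA _ (cmx A') A') AA.
  rewrite diag_mxM -(mulmxA u) diag_mxM -(mulmxA u) diag_mxM quad_diag /norm2.
  apply: ler_sum => k _; rewrite !mxE.
  have [->|dn0] := eqVneq (d 0 k) 0.
    by rewrite !mulr0 !mul0r exprn_ge0.
  by rewrite mulrA mulVf // mul1r mulfV // mul1r.
rewrite mxtrace_mulC mulmxA mxtrace_mulC mulmxA -/A' /W' -!mulmxA -/A' AA mulmxA !diag_mxM mxtrace_diag.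
rewrite eS mxtrace_mulC mulmxA UQ mul1mx mxtrace_diag.
apply: eq_bigr => k _; rewrite !mxE.
have [->|dn0] := eqVneq (d 0 k) 0; first by rewrite mulr0.
by rewrite mulVf // mul1r.
Qed.

Lemma sqrt_exists n (A : 'M[algC]_n) : exists S, psdmx S /\ S *m S = cmx A *m A.
Proof.
have hM : cmx (cmx A *m A) = cmx A *m A by rewrite cmxM cmxK.
have [P [e [UP eM]]] := spectral_herm hM.
have e0 : forall k, 0 <= e 0 k.
  move=> k; rewrite -(quad_spec e k UP) -eM.
  rewrite mulmxA -(mulmxA _ A) -{2}(cmxK A) -cmxM -norm2E.
  exact: norm2_ge0.
pose s := \row_j sqrtC (e 0 j).
exists (cmx P *m diag_mx s *m P); split; [split|].
- by rewrite adjmx_cmx !cmxM cmxK cmx_diag mulmxA; congr (_ *m _ *m _);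
  congr diag_mx; apply/matrixP=> i j; rewrite !mxE geC0_conj // sqrtC_ge0.
- move=> v; rewrite -/(cmx v) !mulmxA -(mulmxA _ P) -{2}(cmxK P) -cmxM.
  rewrite quad_diag; apply: sumr_ge0 => k _; rewrite mulr_ge0 ?exprn_ge0 //.
  by rewrite mxE sqrtC_ge0.
- rewrite !mulmxA -(mulmxA _ P (cmx P)) UP mulmx1 -(mulmxA (cmx P) (diag_mx s)) diag_mxM eM.
  congr (_ *m diag_mx _ *m _); apply/matrixP=> i j; rewrite !mxE -expr2 sqrtCK.
  by rewrite ord1.
Qed.

Lemma trnorm_spec n (A : 'M[algC]_n) :
  psdmx (sqrtmx (adjmx A *m A)) /\ sqrtmx (adjmx A *m A) *m sqrtmx (adjmx A *m A) = cmx A *m A.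
Proof.
rewrite /sqrtmx; case: excluded_middle_informative => [H|H].
  by case: constructive_indefinite_description.
by exfalso; apply: H; exact: sqrt_exists.
Qed.

Lemma trnorm_le n (A K : 'M[algC]_n) : contr K ->
  \tr (K *m A) + (\tr (K *m A))^* <= trnorm A *+ 2.
Proof. by move=> cK; have [p e] := trnorm_spec A; exact: key_le. Qed.

Lemma trnorm_eq n (A : 'M[algC]_n) : exists W, contr W /\ \tr (W *m A) = trnorm A.
Proof. by have [p e] := trnorm_spec A; exact: key_eq. Qed.

Lemma trnorm_ge0 n (A : 'M[algC]_n) : 0 <= trnorm A.
Proof.
have := trnorm_le A (K := 0) _; rewrite mul0mx mxtrace0 rmorph0 addr0 pmulrn_lge0 //.
by apply; move=> v; rewrite mulmx0 /norm2 big1 ?norm2_ge0 // => i _; rewrite mxE normr0 expr0n.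
Qed.

Definition agree m (k : nat) (z w : m.-tuple bool) :=
  [forall j : 'I_m, (j < k)%N ==> (tnth z j == tnth w j)].

Lemma agree0 m (z w : m.-tuple bool) : agree 0 z w.
Proof. by apply/forallP => j. Qed.

Lemma agreem m (z w : m.-tuple bool) : agree m z w = (z == w).
Proof.
apply/idP/eqP => [/forallP h|->]; last by apply/forallP => j; rewrite eqxx implybT.
by apply: eq_from_tnth => j; have := h j; rewrite ltn_ord => /eqP.
Qed.

Lemma agreeS m (i : 'I_m) (z w : m.-tuple bool) :
  agree i.+1 z w = agree i z w && (tnth z i == tnth w i).
Proof.
apply/idP/andP => [/forallP h|[/forallP h1 h2]].
  split; first by apply/forallP => j; apply/implyP => ji; have := h j; rewrite ltnS ltnW.
  by have := h i; rewrite ltnSn.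
apply/forallP => j; apply/implyP; rewrite ltnS leq_eqVlt => /orP[/eqP ji|ji].
  by have -> : j = i by apply: val_inj.
by have := h1 j; rewrite ji.
Qed.

Lemma agree_pre m (i : 'I_m) (z w : m.-tuple bool) :
  agree i z w = (bitprefix z i == bitprefix w i).
Proof.
apply/forallP/eqP => [h|h j].
  apply: eq_from_tnth => j; rewrite !tnth_mktuple.
  by have := h (widen_ord (ltnW (ltn_ord i)) j); rewrite /= ltn_ord => /eqP.
apply/implyP => ji.
have := congr1 (fun t => tnth t (Ordinal ji)) h; rewrite !tnth_mktuple.
have -> : widen_ord (ltnW (ltn_ord i)) (Ordinal ji) = j by apply: val_inj.
by move=> ->.

Qed.

Definition sgn (b : bool) : algC := if b then -1 else 1.
Definition cc (m k : nat) : algC := ((2 ^ (m - k))%:R)^-1.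
Definition Yf m (i : 'I_m) (g : m.-tuple bool -> algC) (v : i.-tuple bool) : algC :=
  \sum_(z | tnth z i == false) (v == bitprefix z i)%:R * g z
  - \sum_(z | tnth z i == true) (v == bitprefix z i)%:R * g z.
Arguments Yf {m} i g v.

Lemma Yf_agree m (i : 'I_m) (g : m.-tuple bool -> algC) (w : m.-tuple bool) b :
  \sum_(z | tnth z i == b) (bitprefix w i == bitprefix z i)%:R * g z
  = \sum_(z | agree i z w && (tnth z i == b)) g z.
Proof.
rewrite [RHS]big_mkcondl /=; apply: eq_bigr => z _.
by rewrite agree_pre eq_sym; case: (_ == _); rewrite ?mul1r ?mul0r.
Qed.

Lemma cc_step m (i : 'I_m) : cc m i.+1 = cc m i *+ 2.
Proof.
have e : (2 ^ (m - i))%:R = (2 ^ (m - i.+1))%:R * 2%:R :> algC.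
  by rewrite -natrM -expnSr subnSK.
rewrite /cc e invfM -mulrnAr.
rewrite [_^-1 *+ 2](_ : _ = 1) ?mulr1 //.
by rewrite mulr2n [RHS](splitr 1) mul1r.
Qed.

Lemma telescope m (g : m.-tuple bool -> algC) (w : m.-tuple bool) :
  g w - cc m 0 * \sum_z g z
  = \sum_(i < m) cc m i * sgn (tnth w i) * Yf i g (bitprefix w i).
Proof.
pose M k := cc m k * \sum_(z | agree k z w) g z.
have Mm : M m = g w.
  rewrite /M /cc subnn expn0 invr1 mul1r.
  by rewrite (eq_bigl (pred1 w)) ?big_pred1_eq // => z; rewrite agreem.
have M0 : M 0%N = cc m 0 * \sum_z g z.
  by rewrite /M; congr (_ * _); apply: eq_bigl => z; rewrite agree0.
have step : forall i : 'I_m, M i.+1 - M i = cc m i * sgn (tnth w i) * Yf i g (bitprefix w i).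
  move=> i; rewrite /M cc_step.
  rewrite (bigID (fun z => tnth z i == tnth w i) (fun z => agree i z w)) /=.
  rewrite (eq_bigl (fun z => agree i z w && (tnth z i == tnth w i))); last first.
    by move=> z; rewrite agreeS.
  set A := \sum_(z | _ && (tnth z i == tnth w i)) g z.
  set B := \sum_(z | _ && (tnth z i != tnth w i)) g z.
  have -> : cc m i *+ 2 * A - cc m i * (A + B) = cc m i * (A - B).
    by rewrite mulrDr mulr2n mulrDl opprD addrA addrK mulrBr.
  rewrite /Yf !Yf_agree -mulrA; congr (_ * _).
  have nb : forall b : bool, (fun z : m.-tuple bool => agree i z w && (tnth z i != b))
      =1 (fun z => agree i z w && (tnth z i == ~~ b)).
    by move=> b z; case: (tnth z i); case: b.
  rewrite /B (eq_bigl _ _ (nb _)).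
  by rewrite /A; case: (tnth w i); rewrite /= ?mul1r // mulN1r opprB.
rewrite -Mm -M0 -(telescope_sumr (fun k => M k) (leq0n m)) big_mkord.
by apply: eq_bigr => i _; rewrite step.
Qed.

Definition ee (T : finType) (A : op T) (x y : T) : algC := A (enum_rank x) (enum_rank y).

Lemma sum_rank (T : finType) (F : 'I_#|T| -> algC) : \sum_i F i = \sum_x F (enum_rank x).
Proof. by rewrite (reindex (@enum_rank T)) //; apply: onW_bij; exact: enum_rank_bij. Qed.

Lemma tr_ee (T : finType) (A : op T) : \tr A = \sum_x ee A x x.
Proof. by rewrite /mxtrace sum_rank. Qed.

Lemma ee_mul (T : finType) (A B : op T) x y : ee (A *m B) x y = \sum_z ee A x z * ee B z y.
Proof. by rewrite /ee mxE sum_rank. Qed.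

Lemma ee_tens (T1 T2 : finType) (A : op T1) (B : op T2) x1 x2 y1 y2 :
  ee (tens A B) (x1, x2) (y1, y2) = ee A x1 y1 * ee B x2 y2.
Proof. by rewrite /ee /tens mxE !enum_rankK. Qed.

Lemma ee_ketbra (T : finType) (z x y : T) : ee (ketbra z) x y = ((x == z) && (y == z))%:R.
Proof. by rewrite /ee /ketbra mxE !(inj_eq enum_rank_inj). Qed.

Lemma ee_rhoU m (x y : m.-tuple bool) : ee (rhoU m) x y = ((2 ^ m)%:R)^-1 * (x == y)%:R.
Proof. by rewrite /ee /rhoU !mxE (inj_eq enum_rank_inj). Qed.

Lemma ee_sum (T : finType) (I : finType) (P : pred I) (F : I -> op T) x y :
  ee (\sum_(i | P i) F i) x y = \sum_(i | P i) ee (F i) x y.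
Proof. by rewrite /ee summxE. Qed.

Lemma ee_add (T : finType) (A B : op T) x y : ee (A + B) x y = ee A x y + ee B x y.
Proof. by rewrite /ee mxE. Qed.

Lemma ee_sub (T : finType) (A B : op T) x y : ee (A - B) x y = ee A x y - ee B x y.
Proof. by rewrite /ee !mxE. Qed.

Lemma ee_scale (T : finType) (c : algC) (A : op T) x y : ee (c *: A) x y = c * ee A x y.
Proof. by rewrite /ee mxE. Qed.

Definition mkop (T : finType) (f : T -> T -> algC) : op T :=
  \matrix_(i, j) f (enum_val i) (enum_val j).

Lemma ee_mkop (T : finType) f (x y : T) : ee (mkop f) x y = f x y.
Proof. by rewrite /ee mxE !enum_rankK. Qed.

Lemma tr_mul_ee (T : finType) (A B : op T) :
  \tr (A *m B) = \sum_x \sum_y ee A x y * ee B y x.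
Proof. by rewrite tr_ee; apply: eq_bigr => x _; rewrite ee_mul. Qed.

Lemma jensen (I : finType) (P : pred I) (a : I -> algC) :
  `|\sum_(i | P i) a i| ^+ 2 <= #|P|%:R * \sum_(i | P i) `|a i| ^+ 2.
Proof.
set S := \sum_(i | P i) a i.
have H : 0 <= \sum_(i | P i) \sum_(j | P j) `|a i - a j| ^+ 2.
  by apply: sumr_ge0 => i _; apply: sumr_ge0 => j _; rewrite exprn_ge0.
have cP : forall x : algC, \sum_(j | P j) x = #|P|%:R * x.
  by move=> x; rewrite sumr_const mulr_natl.
have SS : \sum_(i | P i) \sum_(j | P j) a i * (a j)^* = `|S| ^+ 2.
  rewrite normCK /S rmorph_sum mulr_suml; apply: eq_bigr => i _.
  by rewrite mulr_sumr.
have E : \sum_(i | P i) \sum_(j | P j) `|a i - a j| ^+ 2 =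
   (#|P|%:R * \sum_(i | P i) `|a i| ^+ 2) *+ 2 - (`|S| ^+ 2 + (`|S| ^+ 2)^*).
  transitivity (\sum_(i | P i) \sum_(j | P j) (`|a i| ^+ 2 + `|a j| ^+ 2
                 - (a i * (a j)^* + (a i * (a j)^*)^*))).
    by apply: eq_bigr => i _; apply: eq_bigr => j _; rewrite normB2.
  under eq_bigr do rewrite sumrB big_split /=.
  rewrite sumrB big_split /= -SS.
  have T3 : \sum_(i | P i) \sum_(j | P j) (a i * (a j)^* + (a i * (a j)^*)^*) =
     \sum_(i | P i) \sum_(j | P j) a i * (a j)^* + (\sum_(i | P i) \sum_(j | P j) a i * (a j)^*)^*.
    rewrite rmorph_sum -big_split; apply: eq_bigr => i _ /=.
    by rewrite rmorph_sum -big_split.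
  rewrite T3; congr (_ - _).
  rewrite mulr2n; congr (_ + _).
    by rewrite mulr_sumr; apply: eq_bigr => i _; rewrite cP.
  by rewrite exchange_big /= mulr_sumr; apply: eq_bigr => i _; rewrite cP.
rewrite E geC0_conj ?exprn_ge0 // subr_ge0 -!mulr2n in H.
by rewrite -(ler_pMn2r (n := 2)).
Qed.

Lemma count_pre m (i : 'I_m) (v : i.-tuple bool) :
  (#|[pred w : m.-tuple bool | bitprefix w i == v]| <= 2 ^ (m - i)%N)%N.
Proof.
have sidx : forall j : 'I_(m - i), (i + j < m)%N.
  by move=> j; rewrite -ltn_subRL.
pose suf (w : m.-tuple bool) : (m - i).-tuple bool :=
  [tuple tnth w (Ordinal (sidx j)) | j < m - i].
set J := [pred w : m.-tuple bool | bitprefix w i == v].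
have inj : {in J &, injective suf}.
  move=> w w' /eqP hw /eqP hw' hs; apply: eq_from_tnth => l.
  have [li|il] := ltnP l i.
    have : agree i w w' by rewrite agree_pre hw hw'.
    by move/forallP/(_ l); rewrite li => /eqP.
  have lj : (l - i < m - i)%N by rewrite ltn_sub2r // (leq_ltn_trans il).
  have := congr1 (fun t => tnth t (Ordinal lj)) hs; rewrite !tnth_mktuple.
  by have -> : Ordinal (sidx (Ordinal lj)) = l by apply: val_inj; rewrite /= subnKC.
rewrite -(card_in_imset inj); apply: leq_trans (max_card _) _.
by rewrite card_tuple card_bool.
Qed.

Lemma sum_pair (T1 T2 : finType) (F : T1 * T2 -> algC) : \sum_a F a = \sum_x \sum_y F (x, y).
Proof. by rewrite pair_bigA; apply: eq_bigr => -[]. Qed.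

Lemma norm2_ee (T : finType) (u : 'rV[algC]_#|T|) : norm2 u = \sum_x `|u 0 (enum_rank x)| ^+ 2.
Proof. by rewrite /norm2 sum_rank. Qed.

Lemma rowmul_ee (T : finType) (u : 'rV[algC]_#|T|) (M : op T) y :
  (u *m M) 0 (enum_rank y) = \sum_x u 0 (enum_rank x) * ee M x y.
Proof. by rewrite mxE sum_rank. Qed.

Lemma pick_sum (T : finType) (a : T) (F : T -> algC) : \sum_x (x == a)%:R * F x = F a.
Proof.
rewrite (bigD1 a) //= eqxx mul1r big1 ?addr0 // => x xa.
by rewrite (negbTE xa) mul0r.
Qed.

Lemma contr_block (A B D : finType) (pre : A -> B) (N : nat) (sg : A -> algC) (W : op (A * D)%type) :
  contr W -> (0 < N)%N -> (forall b, #|[pred a | pre a == b]| <= N)%N -> (forall a, `|sg a| <= 1) ->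
  contr (mkop (fun u v : B * D => (u.1 == v.1)%:R *
     ((N%:R)^-1 * \sum_(a | pre a == u.1) sg a * ee W (a, u.2) (a, v.2)))).
Proof.
move=> cW N0 hJ hs uu.
set c : algC := (N%:R)^-1.
have c0 : 0 <= c by rewrite invr_ge0 ler0n.
pose U (b : B) (e : D) := uu 0 (enum_rank (b, e)).
pose ut (a : A) : 'rV[algC]_#|{: (A * D)%type}| :=
  \row_k (((enum_val k).1 == a)%:R * U (pre a) (enum_val k).2).
pose t a e' := \sum_e U (pre a) e * ee W (a, e) (a, e').
have tE : forall a e', (ut a *m W) 0 (enum_rank (a, e')) = t a e'.
  move=> a e'; rewrite rowmul_ee sum_pair.
  rewrite (bigD1 a) //= [X in _ + X]big1 ?addr0 => [|a' aa]; last first.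
    by apply: big1 => e _; rewrite mxE enum_rankK /= (negbTE aa) !mul0r.
  by apply: eq_bigr => e _; rewrite mxE enum_rankK /= eqxx mul1r.
set K := mkop _.
have entry : forall b' e', (uu *m K) 0 (enum_rank (b', e')) =
    c * \sum_(a | pre a == b') sg a * t a e'.
  move=> b' e'; rewrite rowmul_ee sum_pair.
  under eq_bigr => b _ do under eq_bigr => e _ do rewrite ee_mkop /= mulrCA.
  under eq_bigr do rewrite -mulr_sumr.
  rewrite pick_sum /t.
  under eq_bigr do rewrite mulrCA mulr_sumr.
  rewrite -mulr_sumr exchange_big /=; congr (_ * _); apply: eq_bigr => a /eqP <-.
  by rewrite mulr_sumr; apply: eq_bigr => e _; rewrite mulrCA.
have cN : c * N%:R = 1 by rewrite mulVf // pnatr_eq0 -lt0n.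
have part : forall F : A -> algC, \sum_a F a = \sum_b \sum_(a | pre a == b) F a.
  by move=> F; rewrite (partition_big pre xpredT) //.
rewrite norm2_ee sum_pair.
under eq_bigr => b _ do under eq_bigr => e _ do rewrite entry.
apply: (@le_trans _ _ (\sum_b \sum_e c * \sum_(a | pre a == b) `|t a e| ^+ 2)).
  apply: ler_sum => b _; apply: ler_sum => e _.
  rewrite normrM exprMn (ger0_norm c0).
  apply: (@le_trans _ _ (c ^+ 2 * (N%:R * \sum_(a | pre a == b) `|t a e| ^+ 2))).
    apply: ler_wpM2l; first by rewrite exprn_ge0.
    apply: le_trans (jensen _ _) _.
    apply: ler_pM.
    - by rewrite ler0n.
    - by apply: sumr_ge0 => a _; rewrite exprn_ge0.
    - by rewrite ler_nat; apply: hJ.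
    apply: ler_sum => a _; rewrite normrM exprMn -[X in _ <= X]mul1r.
    by apply: ler_wpM2r; rewrite ?exprn_ge0 // exprn_ile1.
  by rewrite expr2 -mulrA (mulrA c (N%:R)) cN mul1r.
apply: (@le_trans _ _ (c * \sum_a \sum_e `|U (pre a) e| ^+ 2)).
  rewrite (part (fun a => \sum_e `|U (pre a) e| ^+ 2)) mulr_sumr.
  apply: ler_sum => b _; rewrite -mulr_sumr exchange_big /=.
  apply: ler_wpM2l => //; apply: ler_sum => a _.
  have h1 := cW (ut a).
  have n1 : norm2 (ut a) = \sum_e `|U (pre a) e| ^+ 2.
    rewrite norm2_ee sum_pair (bigD1 a) //= [X in _ + X]big1 ?addr0 => [|a' aa].
      by apply: eq_bigr => e _; rewrite mxE enum_rankK /= eqxx mul1r.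
    by apply: big1 => e _; rewrite mxE enum_rankK /= (negbTE aa) mul0r normr0 expr0n.
  have n2 : \sum_e `|t a e| ^+ 2 <= norm2 (ut a *m W).
    rewrite norm2_ee sum_pair (bigD1 a) //= -[X in X <= _]addr0 lerD //.
      by apply: ler_sum => e _; rewrite tE.
    by apply: sumr_ge0 => a' _; apply: sumr_ge0 => e _; rewrite exprn_ge0.
  by rewrite -n1; apply: le_trans n2 h1.
rewrite norm2_ee sum_pair (part (fun a => \sum_e `|U (pre a) e| ^+ 2)) mulr_sumr.
apply: ler_sum => b _.
rewrite (eq_bigr (fun _ => \sum_e `|U b e| ^+ 2)); last by move=> a /eqP ->.
rewrite sumr_const -mulr_natl mulrA -[X in _ <= X]mul1r.
apply: ler_wpM2r; first by apply: sumr_ge0 => e _; rewrite exprn_ge0.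
apply: (@le_trans _ _ (c * N%:R)); last by rewrite cN.
by apply: ler_wpM2l => //; rewrite ler_nat; apply: hJ.
Qed.

Lemma pick_sum2 (T1 T2 : finType) (v : T1) (F : T1 -> T2 -> algC) :
  \sum_v' \sum_x' (v' == v)%:R * F v' x' = \sum_x' F v x'.
Proof. by under eq_bigr do rewrite -mulr_sumr; rewrite pick_sum. Qed.

Lemma eeD m d (p : m.-tuple bool -> algC) (rho : m.-tuple bool -> op 'I_d) w x w' x' :
  ee ((\sum_z p z *: tens (ketbra z) (rho z)) - tens (rhoU m) (\sum_z p z *: rho z))
     (w, x) (w', x') =
  (w == w')%:R * (p w * ee (rho w) x x' - cc m 0 * \sum_z p z * ee (rho z) x x').
Proof.
rewrite ee_sub ee_sum ee_tens ee_rhoU ee_sum /cc subn0.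
under eq_bigr do rewrite ee_scale ee_tens ee_ketbra.
under [X in _ - _ * X]eq_bigr do rewrite ee_scale.
rewrite mulrBr; congr (_ - _); last by rewrite mulrCA mulrA.
have [<-|ne] := eqVneq w w'.
  rewrite mul1r (bigD1 w) //= eqxx mul1r big1 ?addr0 // => z zw.
  by rewrite eq_sym (negbTE zw) mul0r mulr0.
rewrite mul0r big1 // => z _.
have [ez|nz] := eqVneq w z; last by rewrite mul0r mulr0.
by rewrite -ez eq_sym (negbTE ne) mul0r mulr0.
Qed.

Lemma eeX m d (p : m.-tuple bool -> algC) (rho : m.-tuple bool -> op 'I_d) (i : 'I_m) v x x' :
  ee ((\sum_(z | tnth z i == false) p z *: tens (ketbra (bitprefix z i)) (rho z))
      - (\sum_(z | tnth z i == true) p z *: tens (ketbra (bitprefix z i)) (rho z))) (v, x) (v, x')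
  = Yf i (fun z => p z * ee (rho z) x x') v.
Proof.
rewrite ee_sub !ee_sum /Yf.
by congr (_ - _); apply: eq_bigr => z _; rewrite ee_scale ee_tens ee_ketbra andbb mulrCA.
Qed.

Theorem mainTheorem12 (m d : nat) (p : m.-tuple bool -> algC)
    (rho : m.-tuple bool -> op 'I_d) (eps : algC) :
  (forall z, 0 <= p z) -> \sum_z p z = 1 ->
  (forall z, density (rho z)) ->
  0 <= eps ->
  trnorm ((\sum_z p z *: tens (ketbra z) (rho z))
          - tens (rhoU m) (\sum_z p z *: rho z)) > eps ->
  exists i : 'I_m,
    trnorm ((\sum_(z | tnth z i == false) p z *: tens (ketbra (bitprefix z i)) (rho z))
            - (\sum_(z | tnth z i == true) p z *: tens (ketbra (bitprefix z i)) (rho z)))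
    > eps / m%:R.
Proof.
move=> _ _ _ eps0.
set D := (_ - _).
have [W [cW trW]] := trnorm_eq D.
set Xm := fun i : 'I_m => ((\sum_(z | tnth z i == false) p z *: tens (ketbra (bitprefix z i)) (rho z))
            - (\sum_(z | tnth z i == true) p z *: tens (ketbra (bitprefix z i)) (rho z))).
rewrite -/(Xm _).
pose g x x' := fun z => p z * ee (rho z) x x'.
pose T (i : 'I_m) := \sum_w \sum_x \sum_x' ee W (w, x) (w, x') *
   (cc m i * sgn (tnth w i) * Yf i (g x' x) (bitprefix w i)).
have trWD : \tr (W *m D) = \sum_i T i.
  rewrite tr_mul_ee sum_pair.
  under eq_bigr do under eq_bigr do rewrite sum_pair.
  under eq_bigr do under eq_bigr do under eq_bigr do under eq_bigr do rewrite eeD mulrCA.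
  under eq_bigr do under eq_bigr do rewrite pick_sum2.
  rewrite /T [RHS]exchange_big /=; apply: eq_bigr => w _.
  rewrite [RHS]exchange_big /=; apply: eq_bigr => x _.
  rewrite [RHS]exchange_big /=; apply: eq_bigr => x' _.
  by rewrite -mulr_sumr (telescope (g x' x) w).
have TK : forall i, exists K, contr K /\ T i = \tr (K *m Xm i).
  move=> i; pose pre := fun w : m.-tuple bool => bitprefix w i.
  exists (mkop (fun u v : (i.-tuple bool * 'I_d)%type => (u.1 == v.1)%:R *
     (((2 ^ (m - i))%N%:R)^-1 * \sum_(a | pre a == u.1) sgn (tnth a i) * ee W (a, u.2) (a, v.2)))).
  split.
    apply: contr_block => //.
    - by rewrite expn_gt0.
    - by move=> b; apply: count_pre.
    - by move=> a; rewrite /sgn; case: (tnth a i); rewrite ?normrN normr1.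
  rewrite tr_mul_ee sum_pair.
  under eq_bigr do under eq_bigr do rewrite sum_pair.
  under eq_bigr do under eq_bigr do under eq_bigr do under eq_bigr do
    rewrite ee_mkop /= -mulrA eq_sym.
  under eq_bigr do under eq_bigr do rewrite pick_sum2.
  rewrite /T (partition_big pre xpredT) //=; apply: eq_bigr => v _.
  rewrite exchange_big /=; apply: eq_bigr => x _.
  rewrite exchange_big /=; apply: eq_bigr => x' _.
  rewrite eeX -mulrA mulr_suml mulr_sumr; apply: eq_bigr => w /eqP hw.
  rewrite /pre in hw; rewrite hw /g /cc.
  by rewrite mulrA [ee W _ _ * _]mulrC -!mulrA.
have bound : forall i, T i + (T i)^* <= trnorm (Xm i) *+ 2.
  by move=> i; have [K [cK ->]] := TK i; exact: trnorm_le.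
have tot : trnorm D <= \sum_i trnorm (Xm i).
  have t0 := trnorm_ge0 D.
  rewrite -(ler_pMn2r (n := 2)) //.
  have -> : trnorm D *+ 2 = \tr (W *m D) + (\tr (W *m D))^*.
    by rewrite trW geC0_conj // mulr2n.
  rewrite trWD rmorph_sum -big_split /= -sumrMnl; apply: ler_sum => i _; exact: bound i.
move=> hgt; apply: NNPP => nex.
have hle : forall i, trnorm (Xm i) <= eps / m%:R.
  move=> i; have h := not_ex_all_not _ _ nex i.
  rewrite real_leNgt ?ger0_real ?trnorm_ge0 ?divr_ge0 ?ler0n //; exact/negP.
have hs : \sum_i trnorm (Xm i) <= eps.
  apply: le_trans (ler_sum _ (fun i _ => hle i)) _; rewrite sumr_const card_ord.
  have [->|mpos] := posnP m; first by rewrite mulr0n.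
  have e : eps / m%:R * m%:R = eps by rewrite divfK // pnatr_eq0 -lt0n.
  by rewrite mulr_natr in e; rewrite e.
by have := lt_le_trans hgt (le_trans tot hs); rewrite ltxx.
Qed.
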